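(* Let $r,p$ be positive integers with $p$ prime, and let $k$ be the largest integer such that $p>2k^2r^2$. Then there exists a set $S\subseteq\{0,\dots,p-1\}$ of size at least $k$ that does not contain an $r$-weighted arithmetic progression modulo $p$.
   Context: A set $S$ of non-negative integers contains no $r$-weighted arithmetic progression modulo $p$ if there do not exist pairwise distinct $s_1,s_2,s_3\in S$ and integers $0<x,y<r-1$ with $x+y<r$ such that $xs_1+ys_2\equiv(x+y)s_3\pmod p$. *)

(* Defs.v *)
From mathcomp Require Import all_boot.
Set Implicit Arguments. Unset Strict Implicit. Unset Printing Implicit Defensive.

Definition has_rwap (r p : nat) (S : {set 'I_p}) : Prop :=
  exists (s1 s2 s3 : 'I_p) (x y : nat),
    [/\ [/\ s1 \in S, s2 \in S & s3 \in S],
        [/\ s1 != s2, s1 != s3 & s2 != s3],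
        [/\ 0 < x, x < r - 1, 0 < y, y < r - 1 & x + y < r] &
        x * s1 + y * s2 = (x + y) * s3 %[mod p]].

Definition no_rwap (r p : nat) (S : {set 'I_p}) : Prop := ~ has_rwap r S.

(* Main.v *)
Require Import Defs.
From mathcomp Require Import all_boot.
From mathcomp Require Import zify.

Set Implicit Arguments. Unset Strict Implicit. Unset Printing Implicit Defensive.

Lemma mod_cancel p c a b : prime p -> 0 < c < p -> a < p -> b < p ->
  c * a = c * b %[mod p] -> a = b.
Proof.
move=> pp /andP[c0 cp] ap bp.
wlog le: a b ap bp / b <= a.
  move=> H E; case: (leqP b a) => h; first exact: H.
  symmetry; apply: H => //; first exact: ltnW.
move/eqP; rewrite eqn_mod_dvd ?leq_mul2l ?le ?orbT // -mulnBr Euclid_dvdM //.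
case/orP=> /dvdn_leq.
  by move=> /(_ c0) h; lia.
move=> h; case: (posnP (a - b)) => e; first lia.
by have := h e; lia.
Qed.

Section Constr.
Variables (r p : nat).

Definition fbad (S : {set 'I_p}) (z : 'I_p * 'I_p * ('I_r * 'I_r) * bool) : 'I_p :=
  let a := z.1.1.1 in let b := z.1.1.2 in let x := nat_of_ord z.1.2.1 in
  let y := nat_of_ord z.1.2.2 in
  if z.2 then odflt a [pick t : 'I_p | x * a + y * b == (x + y) * t %[mod p]]
  else odflt a [pick t : 'I_p | x * t + y * a == (x + y) * b %[mod p]].

Definition Dom (S : {set 'I_p}) : {set 'I_p * 'I_p * ('I_r * 'I_r) * bool} :=
  setX (setX (setX S S) [set: 'I_r * 'I_r]) [set: bool].

Definition Bad (S : {set 'I_p}) := S :|: [set fbad S z | z in Dom S].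

Hypothesis pp : prime p.
Hypothesis rp : r < p.

Lemma bad3 (S : {set 'I_p}) (s1 s2 s : 'I_p) (x y : nat) : s1 \in S -> s2 \in S ->
  0 < x < r -> 0 < y -> x + y < r ->
  x * s1 + y * s2 = (x + y) * s %[mod p] -> s \in Bad S.
Proof.
move=> h1 h2 /andP[x0 xr] y0 xyr E.
have yr : y < r by lia.
apply/setUP; right; apply/imsetP.
exists (s1, s2, (Ordinal xr, Ordinal yr), true).
  by rewrite /Dom !in_setX h1 h2 !in_setT.
rewrite /fbad /=; case: pickP => [t /eqP Ht|H]; last first.
  by move: (H s) => /=; rewrite E eqxx.
apply: val_inj => /=; apply: (@mod_cancel p (x + y)) => //.
- by apply/andP; split; lia.
- by rewrite -Ht E.
Qed.

Lemma bad1 (S : {set 'I_p}) (s s2 s3 : 'I_p) (x y : nat) : s2 \in S -> s3 \in S ->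
  0 < x < r -> 0 < y -> x + y < r ->
  x * s + y * s2 = (x + y) * s3 %[mod p] -> s \in Bad S.
Proof.
move=> h1 h2 /andP[x0 xr] y0 xyr E.
have yr : y < r by lia.
apply/setUP; right; apply/imsetP.
exists (s2, s3, (Ordinal xr, Ordinal yr), false).
  by rewrite /Dom !in_setX h1 h2 !in_setT.
rewrite /fbad /=; case: pickP => [t /eqP Ht|H]; last first.
  by move: (H s) => /=; rewrite E eqxx.
apply: val_inj => /=; apply: (@mod_cancel p x) => //.
- by apply/andP; split; lia.
- by apply/eqP; rewrite -(eqn_modDr (y * s2)) Ht E.
Qed.

Lemma card_Bad (S : {set 'I_p}) : #|Bad S| <= #|S| + 2 * #|S| * #|S| * (r * r).
Proof.
rewrite /Bad; apply: (leq_trans (leq_card_setU _ _)).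
rewrite leq_add2l; apply: (leq_trans (leq_imset_card _ _)).
by rewrite /Dom !cardsX !cardsT card_prod card_bool card_ord mulnC !mulnA.
Qed.

End Constr.

Theorem theorem10 (r p k : nat) :
  0 < r -> prime p ->
  2 * k ^ 2 * r ^ 2 < p ->
  (forall k' : nat, 2 * k' ^ 2 * r ^ 2 < p -> k' <= k) ->
  exists S : {set 'I_p}, k <= #|S| /\ no_rwap r S.
Proof.
move=> r0 pp hk _.
suff: forall m, m <= k -> exists S : {set 'I_p}, #|S| = m /\ no_rwap r S.
  by move=> /(_ k (leqnn k)) [S [<- H]]; exists S.
elim=> [_|m IH mk].
  exists set0; split; first by rewrite cards0.
  by move=> [s1 [s2 [s3 [x [y [[]]]]]]]; rewrite in_set0.
have [S [cS nS]] := IH (ltnW mk).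
have k1 : 1 <= k ^ 2 by rewrite expn_gt0; lia.
have r2 : r <= r ^ 2 by rewrite expnS expn1 leq_pmulr.
have rp : r < p.
  apply: leq_ltn_trans hk; apply: (leq_trans r2).
  by apply: leq_pmull; rewrite muln_gt0 k1.
have : 0 < #|~: Bad r S|.
  have := cardsC (Bad r S); rewrite card_ord.
  have hb : m + 2 * m * m * (r * r) < p.
    apply: leq_trans hk.
    have e1 : m + 2 * m * m * (r * r) < 2 * m.+1 ^ 2 * r ^ 2.
      rewrite !expnS !expn0 !muln1.
      have : m <= m * (r * r) by apply: leq_pmulr; rewrite muln_gt0 r0.
      nia.
    rewrite ltnS; apply: (leq_trans (ltnW e1)); apply: leq_mul => //; apply: leq_mul => //; by rewrite leq_exp2r.
  have := card_Bad r S; rewrite cS => h1 h2; lia.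
case/card_gt0P => s; rewrite in_setC => sB.
have sS : s \notin S by apply: contra sB => h; rewrite /Bad in_setU h.
exists (s |: S); split; first by rewrite cardsU1 sS cS add1n.
move=> [s1 [s2 [s3 [x [y [[h1 h2 h3] [d12 d13 d23] [x0 xr y0 yr xyr] E]]]]]].
move: h1 h2 h3; rewrite !in_setU1.
have xr' : 0 < x < r by apply/andP; split; lia.
have yr' : 0 < y < r by apply/andP; split; lia.
have negbT_sym : forall a b : 'I_p, a != b -> b != a by move=> a b; rewrite eq_sym.
have ins : forall t : 'I_p, t != s -> (t == s) || (t \in S) -> t \in S.
  by move=> t /negbTE ->.
case: (eqVneq s1 s) => [e1|n1] /=; [subst s1 | ]; move=> h1 h2 h3.
  have h2' := ins _ (negbT_sym _ _ d12) h2.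
  have h3' := ins _ (negbT_sym _ _ d13) h3.
  by move: sB; rewrite (bad1 pp rp h2' h3' xr' y0 xyr E).
have h1' : s1 \in S by move: h1; rewrite ?(negbTE n1).
case: (eqVneq s2 s) h2 => [e2|n2] h2; [subst s2|].
  have h3' := ins _ (negbT_sym _ _ d23) h3.
  move: sB; rewrite (@bad1 r p pp rp S s s1 s3 y x h1' h3' yr' x0) //; first by lia.
  by rewrite addnC [y + x]addnC.
have h2' : s2 \in S by move: h2; rewrite ?(negbTE n2).
case: (eqVneq s3 s) h3 => [e3|n3] h3; [subst s3|].
  by move: sB; rewrite (bad3 pp rp h1' h2' xr' y0 xyr E).
have h3' : s3 \in S by move: h3; rewrite ?(negbTE n3).
by apply: nS; exists s1, s2, s3, x, y; split.
Qed.
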